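(* Let $P$ be a finite poset. There exist a constant $C(P)$ depending only on $P$ and, for each positive integer $n$, a constant $\alpha_n$ depending only on $n$, such that for all integers $n\ge\dim P$ and $k\ge 2$: if $S\subseteq[k]^n$ does not contain a copy of $P$, then $$L_{[k]^n}(S)\le C(P)\,\alpha_n\log k.$$
   Context: $[k]^n$ is the set of $n$-tuples with entries in $[k]=\{1,\dots,k\}$, ordered pointwise. Its levels are $A_i=\{(a_1,\dots,a_n)\in[k]^n: a_1+\dots+a_n=n+i\}$ for $i=0,\dots,kn-n$. For $S\subseteq[k]^n$, the Lubell mass is $L_{[k]^n}(S)=\sum_{i=0}^{kn-n}\frac{|S\cap A_i|}{|A_i|}$. A subset $P'$ of a poset $Q$ is a copy of $P$ if the subposet of $Q$ induced on $P'$ is isomorphic to $P$. The (Dushnik–Miller) dimension $\dim P$ is the smallest positive integer $d$ for which there exist bijections $L_1,\dots,L_d:P\to[|P|]$ such that $p\le_P q$ iff $L_i(p)\le L_i(q)$ for every $i\in[d]$. *)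

(* Defs.v *)
From mathcomp Require Import all_boot.
From Stdlib Require Import Reals.

Set Implicit Arguments.
Unset Strict Implicit.
Unset Printing Implicit Defensive.

Definition is_partial_order (T : finType) (le : rel T) : Prop :=
  reflexive le /\ antisymmetric le /\ transitive le.

(* Points of [k]^n.  Entries are encoded in 'I_k = {0,..,k-1}, i.e. the
   entry a in [k] = {1,..,k} is stored as a-1. *)
Definition grid (n k : nat) := {ffun 'I_n -> 'I_k}.

Definition grid_le (n k : nat) (x y : grid n k) : bool :=
  [forall j : 'I_n, (x j <= y j)%N].

(* level index: x lies in A_i  iff  sum_j (x_j + 1) = n + i,
   i.e. sum_j x_j = i (with 0-based entries) *)
Definition level (n k : nat) (x : grid n k) : nat := (\sum_(j < n) (x j : nat))%N.

Definition level_set (n k : nat) (i : nat) : {set grid n k} :=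
  [set x : grid n k | level x == i].

Definition lubell (n k : nat) (S : {set grid n k}) : R :=
  sum_f_R0 (fun i => (INR #|S :&: level_set n k i| / INR #|level_set n k i|)%R)
           (k * n - n)%N.

(* S contains a copy of the poset (T, le): some subset of S whose induced
   subposet is isomorphic to (T, le), i.e. an injective order embedding. *)
Definition contains_copy (T : finType) (le : rel T) (n k : nat)
  (S : {set grid n k}) : Prop :=
  exists f : T -> grid n k,
    injective f /\ (forall p, f p \in S) /\
    (forall p q, le p q = grid_le (f p) (f q)).

Definition has_realizer (T : finType) (le : rel T) (d : nat) : Prop :=
  exists L : 'I_d -> T -> 'I_#|T|,
    (forall i, bijective (L i)) /\
    (forall p q, le p q <-> (forall i, (L i p <= L i q)%N)).

Definition is_dim (T : finType) (le : rel T) (d : nat) : Prop :=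
  (0 < d)%N /\ has_realizer le d /\
  (forall d', (0 < d')%N -> has_realizer le d' -> (d <= d')%N).

(* Main.v *)
Require Import Defs.
From mathcomp Require Import all_boot.
From Stdlib Require Import Reals.
From mathcomp Require Import ssrnat zify.
Set Implicit Arguments.
Unset Strict Implicit.
Unset Printing Implicit Defensive.

Notation pt d M := {ffun 'I_d -> 'I_M}.

Definition vals d M (i : 'I_d) (S : {set pt d M}) : {set 'I_M} := [set (x : pt d M) i | x in S].

Lemma mono_iff (T : finType) (a b : T -> nat) : injective a ->
  (forall p q, a p < a q -> b p < b q) -> forall p q, (a p < a q) = (b p < b q).
Proof.
move=> ia hm p q; apply/idP/idP; first exact: hm.
move=> hb; case: (ltngtP (a p) (a q)) => // h.
  by have := hm _ _ h; lia.
by move/ia: h => h; subst; lia.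
Qed.

Lemma card_interval M (V : {set 'I_M}) a N :
  (forall v, v \in V -> a <= v < a + N) -> #|V| <= N.
Proof.
move=> h; rewrite cardE -(size_map val) -(size_iota a N).
apply: uniq_leq_size; first by rewrite (map_inj_uniq val_inj) enum_uniq.
move=> x /mapP [v]; rewrite mem_enum => /h hv -> ; by rewrite mem_iota.
Qed.

Lemma card_spread1 M (V : {set 'I_M}) N :
  (forall v w, v \in V -> w \in V -> v < w + N) -> #|V| <= N.*2.
Proof.
move=> h; case: (set_0Vmem V) => [->|[v0 hv0]]; first by rewrite cards0.
apply: (@card_interval _ _ (v0.+1 - N)) => v hv.
have := h _ _ hv hv0; have := h _ _ hv0 hv; lia.
Qed.

Lemma card_prod d M (S : {set pt d M}) : #|S| <= \prod_i #|vals i S|.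
Proof.
rewrite -(cardsXn (fun i => vals i S)); apply: subset_leq_card.
apply/subsetP => x xS; apply/setXnP => i; apply/imsetP; by exists x.
Qed.

Lemma embed1 M (T : finType) (r : T -> nat) (V : {set 'I_M}) :
  injective r -> #|T| <= #|V| ->
  exists e : T -> 'I_M, (forall p, e p \in V) /\ forall p q, (r p < r q) = (e p < e q).
Proof.
move=> ir hTV.
set l := sort leq (map val (enum V)).
have sl : sorted ltn l.
  rewrite ltn_sorted_uniq_leq sort_uniq (map_inj_uniq val_inj) enum_uniq /=.
  by apply: sort_sorted; exact: leq_total.
have szl : size l = #|V| by rewrite size_sort size_map cardE.
pose rk p := #|[set q | r q < r p]|.
have rkT p : rk p < #|T|.
  rewrite -cardsT; apply: proper_card; apply/properP; split; first exact: subsetT.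
  by exists p; rewrite ?inE // ltnn.
have hex : forall p, exists v : 'I_M, (v \in V) && (val v == nth 0 l (rk p)).
  move=> p; have : nth 0 l (rk p) \in l by apply: mem_nth; rewrite szl; exact: leq_trans (rkT p) hTV.
  rewrite mem_sort => /mapP [v]; rewrite mem_enum => hv ->; exists v; by rewrite hv eqxx.
case: (fin_all_exists hex) => e he.
exists e; split; first by move=> p; case/andP: (he p).
apply: mono_iff => // p q hpq.
have hrk : rk p < rk q.
  apply: proper_card; apply/properP; split.
    by apply/subsetP => u; rewrite !inE => h; exact: ltn_trans h hpq.
  by exists p; rewrite !inE ?ltnn.
case/andP: (he p) => _ /eqP ->; case/andP: (he q) => _ /eqP ->.
apply: (sorted_ltn_nth ltn_trans) => //; rewrite inE szl; exact: leq_trans (rkT _) hTV.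
Qed.

Definition spread d M (S : {set pt d M}) N :=
  forall x y, x \in S -> y \in S -> forall i, x i < y i + N.

Definition pcontains d M (T : finType) (r : 'I_d -> T -> nat) (S : {set pt d M}) :=
  exists f : T -> pt d M, (forall p, f p \in S) /\
    forall i p q, (r i p < r i q) = (f p i < f q i).

Definition KMprop d k c := forall M (T : finType) (r : 'I_d.+1 -> T -> nat)
  (S : {set pt d.+1 M}) N, #|T| = k -> (forall i, injective (r i)) ->
  spread S N -> ~ pcontains r S -> #|S| <= c * N ^ d.

Lemma KM_base k : KMprop 0 k k.
Proof.
move=> M T r S N hk ir _ hnc; rewrite expn0 muln1 leqNgt; apply/negP => hlt.
have hcv : #|vals ord0 S| = #|S|.
  apply: card_in_imset => x y _ _ h; apply/ffunP => i; by rewrite (ord1 i).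
case: (@embed1 M T (r ord0) (vals ord0 S) (ir _)).
  by rewrite hcv hk ltnW.
move=> e [he ho]; apply: hnc; exists (fun p => [ffun _ => e p]); split.
  move=> p; case/imsetP: (he p) => x xS ex.
  suff -> : [ffun=> e p] = x by [].
  by apply/ffunP => i; rewrite ffunE (ord1 i) ex.
by move=> i p q; rewrite !ffunE (ord1 i).
Qed.


Section Contract.
Variables (s1 D M : nat).
Local Notation s := s1.+1.

Definition phi (x : pt D M) : pt D M :=
  [ffun i => Ordinal (leq_ltn_trans (leq_div (x i) s) (ltn_ord (x i)))].

Lemma phiE x i : (phi x i : nat) = x i %/ s.
Proof. by rewrite ffunE. Qed.

Lemma phi_lt x y i : phi x i < phi y i -> x i < y i.
Proof. rewrite !phiE => h; rewrite ltnNge; apply/negP => /(leq_div2r s); lia. Qed.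

Definition fiber (S : {set pt D M}) b := [set x in S | phi x == b].

Lemma contract_avoid (T : finType) (r : 'I_D -> T -> nat) (S : {set pt D M}) :
  (forall i, injective (r i)) -> pcontains r (phi @: S) -> pcontains r S.
Proof.
move=> ir [g [gS go]].
have hex : forall p, exists x, (x \in S) && (phi x == g p).
  by move=> p; case/imsetP: (gS p) => x xS ->; exists x; rewrite xS eqxx.
case: (fin_all_exists hex) => f hf; exists f; split.
  by move=> p; case/andP: (hf p).
move=> i; apply: mono_iff => // p q hpq; apply: phi_lt.
case/andP: (hf p) => _ /eqP ->; case/andP: (hf q) => _ /eqP ->; by rewrite -go.
Qed.

Lemma contract_spread (S : {set pt D M}) N : spread S N -> spread (phi @: S) (N %/ s + 2).
Proof.
move=> hs _ _ /imsetP [x xS ->] /imsetP [y yS ->] i; rewrite !phiE.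
have := hs _ _ xS yS i => h.
have h1 : x i %/ s <= (y i + N) %/ s by apply: leq_div2r; lia.
have h2 := leq_divDl s (y i) N; lia.
Qed.

Lemma card_fibers (S : {set pt D M}) : #|S| = \sum_(b in phi @: S) #|fiber S b|.
Proof.
rewrite -sum1_card (partition_big_imset phi); apply: eq_bigr => b _.
by rewrite -sum1_card; apply: eq_bigl => x; rewrite inE.
Qed.

Lemma fiber_nonthick (S : {set pt D M}) b k :
  (forall j, #|vals j (fiber S b)| < k) -> #|fiber S b| <= (k.-1) ^ D.
Proof.
move=> h; apply: leq_trans (card_prod _) _.
have -> : (k.-1)^D = \prod_(i < D) k.-1 by rewrite prod_nat_const card_ord.
apply: leq_prod => i _; have := h i; lia.
Qed.

Lemma fiber_vals_range (S : {set pt D M}) b j v : v \in vals j (fiber S b) ->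
  b j * s <= v < b j * s + s.
Proof.
case/imsetP => x; rewrite inE => /andP [_ /eqP <-] ->; rewrite phiE; lia.
Qed.

Lemma fiber_box (S : {set pt D M}) b : #|fiber S b| <= s ^ D.
Proof.
apply: leq_trans (card_prod _) _.
have -> : s^D = \prod_(i < D) s by rewrite prod_nat_const card_ord.
apply: leq_prod => i _; apply: (@card_interval _ _ (b i * s)) => v; exact: fiber_vals_range.
Qed.

Definition md (v : 'I_M) : 'I_s := inord (v %% s).

Definition off j (S : {set pt D M}) b : {set 'I_s} := [set md v | v in vals j (fiber S b)].

Lemma card_off j (S : {set pt D M}) b : #|off j S b| = #|vals j (fiber S b)|.
Proof.
apply: card_in_imset => v w hv hw h.
have := fiber_vals_range hv; have := fiber_vals_range hw.
move: h => /(congr1 val) /=; rewrite /md.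
rewrite !inordK ?ltn_pmod // => h1 h2 h3.
have e : forall u : nat, b j * s <= u < b j * s + s -> u = b j * s + u %% s.
  move=> u hu; have -> : u = b j * s + (u - b j * s) by lia.
  rewrite modnMDl modn_small; lia.
apply: val_inj => /=; rewrite (e _ h3) (e _ h2) h1 //.
Qed.

End Contract.


Section Group.
Variables (s1 d M : nat).
Local Notation s := s1.+1.
Local Notation phi := (@phi s1 d.+2 M).

Definition dropc (j : 'I_d.+2) (x : pt d.+2 M) : pt d.+1 M := [ffun i => x (lift j i)].

Definition grp (T : finType) (S : {set pt d.+2 M}) j (hJ : 'I_M * {set 'I_s}) :=
  [set b | (b \in phi @: S) && (#|T| <= #|vals j (fiber s1 S b)|)
           && ((b j, off s1 j S b) == hJ)].

Lemma group_lift (T : finType) (r : 'I_d.+2 -> T -> nat) (S : {set pt d.+2 M}) j hJ :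
  (forall i, injective (r i)) ->
  pcontains (fun i => r (lift j i)) (dropc j @: grp T S j hJ) -> pcontains r S.
Proof.
case: hJ => h J ir [g [gG go]].
have hgrp : forall b, b \in grp T S j (h, J) ->
    [/\ b \in phi @: S, #|T| <= #|vals j (fiber s1 S b)|, b j = h & off s1 j S b = J].
  move=> b; rewrite inE => /andP [/andP [hb1 hb2] /eqP [] hb3 hb4]; by split.
have hJ : #|T| <= #|J|.
  case: (pickP T) => [p0 _ | T0]; last by rewrite (eq_card0 T0).
  case/imsetP: (gG p0) => b /hgrp [_ h2 _ <-] _; by rewrite card_off.
case: (embed1 (ir j) hJ) => e [eJ eo].
have hex : forall p, exists x, [&& x \in S, dropc j (phi x) == g p, phi x j == h
                                 & (x j %% s == e p)].
  move=> p; case/imsetP: (gG p) => b /hgrp [_ _ hbj hoff] ->.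
  move: (eJ p); rewrite -hoff => /imsetP [v /imsetP [x]].
  rewrite inE => /andP [xS /eqP phx] -> ->.
  exists x; rewrite xS phx hbj !eqxx /= /md inordK ?ltn_pmod //.
case: (fin_all_exists hex) => f hf.
have fj : forall p, (f p j : nat) = h * s + e p.
  move=> p; case/and4P: (hf p) => _ _ /eqP h1 /eqP h2.
  by rewrite (divn_eq (f p j) s) -h2 -phiE h1 mulnC.
exists f; split; first by move=> p; case/and4P: (hf p).
move=> i; apply: mono_iff => // p q.
case: (unliftP j i) => [i' -> | ->] hpq.
  apply: (@phi_lt s1); case/and4P: (hf p) => _ /eqP hp _ _; case/and4P: (hf q) => _ /eqP hq _ _.
  rewrite !phiE; move: (go i' p q); rewrite hpq -hp -hq !ffunE /= => hh; by rewrite -hh.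
by rewrite !fj ltn_add2l -eo.
Qed.

Lemma group_card k cd (T : finType) (r : 'I_d.+2 -> T -> nat) (S : {set pt d.+2 M}) j hJ N :
  KMprop d k cd -> #|T| = k -> (forall i, injective (r i)) -> ~ pcontains r S ->
  spread (phi @: S) N -> #|grp T S j hJ| <= cd * N ^ d.
Proof.
move=> IH hk ir hnc hsp.
have -> : #|grp T S j hJ| = #|dropc j @: grp T S j hJ|.
  apply/esym/card_in_imset => b b'; rewrite !inE => /andP [_ /eqP h1] /andP [_ /eqP h2] e.
  apply/ffunP => i; case: (unliftP j i) => [i' -> | ->].
    by have := congr1 (fun x : pt d.+1 M => x i') e; rewrite !ffunE.
  by have := congr1 fst (etrans h1 (esym h2)).
apply: (IH M T (fun i => r (lift j i)) _ N hk).
- by move=> i; exact: ir.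
- move=> _ _ /imsetP [x xG ->] /imsetP [y yG ->] i; rewrite !ffunE.
  move: xG yG; rewrite !inE => /andP [/andP [xS _] _] /andP [/andP [yS _] _].
  exact: hsp.
- by move=> hc; apply: hnc; exact: group_lift hc.
Qed.

End Group.


Section Thick.
Variables (s1 d M : nat).
Local Notation s := s1.+1.
Local Notation phi := (@phi s1 d.+2 M).

Lemma thick_card k cd (T : finType) (r : 'I_d.+2 -> T -> nat) (S : {set pt d.+2 M}) j N :
  KMprop d k cd -> #|T| = k -> (forall i, injective (r i)) -> ~ pcontains r S ->
  spread (phi @: S) N ->
  #|[set b in phi @: S | #|T| <= #|vals j (fiber s1 S b)|]| <= N.*2 * 2 ^ s * (cd * N ^ d).
Proof.
move=> IH hk ir hnc hsp.
set Hv := [set (b : pt d.+2 M) j | b in phi @: S].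
have hHv : #|Hv| <= N.*2.
  apply: card_spread1 => _ _ /imsetP [x xS ->] /imsetP [y yS ->]; exact: hsp.
rewrite -sum1_card (partition_big (fun b : pt d.+2 M => (b j, off s1 j S b))
   (mem (setX Hv (powerset [set: 'I_s])))).
  apply: (@leq_trans (\sum_(hJ in setX Hv (powerset [set: 'I_s])) (cd * N ^ d))).
    apply: leq_sum => hJ _; apply: leq_trans (group_card j hJ IH hk ir hnc hsp).
    rewrite -sum1_card; apply: eq_leq; apply: eq_bigl => b; by rewrite !inE andbA.
  rewrite sum_nat_const cardsX card_powerset cardsT card_ord.
  by apply: leq_mul => //; apply: leq_mul.
move=> b; rewrite !inE => /andP [hb _]; rewrite ?powersetE ?subsetT ?andbT.
by apply/imsetP; exists b.
Qed.

End Thick.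


Lemma arith (S S' c K B X Y A sE NE : nat) : S <= S'*K + B*X -> S' <= c*X ->
  X <= A*Y -> 2*K*A <= sE -> sE*Y <= NE -> Y <= NE -> 2*B*A <= c -> S <= c * NE.
Proof. move=> h1 h2 h3 h4 h5 h6 h7.
have a2 : S'*K <= c*X*K by rewrite leq_mul2r h2 orbT.
have a3 : c*X*K <= c*K*(A*Y) by rewrite mulnAC leq_mul2l h3 orbT.
have a4 : B*X <= B*(A*Y) by rewrite leq_mul2l h3 orbT.
have a5 : c*(2*K*A)*Y <= c*sE*Y by rewrite leq_mul2r leq_mul2l h4 !orbT.
have a6 : c*(sE*Y) <= c*NE by rewrite leq_mul2l h5 orbT.
have a7 : 2*B*A*Y <= c*Y by rewrite leq_mul2r h7 orbT.
have a8 : c*Y <= c*NE by rewrite leq_mul2l h6 orbT.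
lia. Qed.

Lemma sum_bool (T : finType) (A : {set T}) (P : pred T) :
  \sum_(b in A) (P b : nat) = #|[set b in A | P b]|.
Proof.
rewrite -sum1_card big_mkcond [RHS]big_mkcond; apply: eq_bigr => b _.
by rewrite !inE; case: (b \in A); case: (P b).
Qed.

Lemma leq_self_exp a e : 0 < e -> a <= a ^ e.
Proof. case: a => // a; case: e => // e _; by rewrite expnS leq_pmulr // expn_gt0. Qed.

Lemma KM_step d k cd : KMprop d k cd -> exists c, KMprop d.+1 k c.
Proof.
move=> IH.
pose s1 := 6 * k ^ d.+2 + 5.
pose s := s1.+1.
pose Bt := s ^ d.+2 * d.+2 * 2 * 2 ^ s * cd.
pose c := 2 * Bt * 3 ^ d.+1 + 2 ^ d.+2 * s.
exists c => M T r S N hk ir.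
elim/ltn_ind: N S => N IHN S hsp hnc.
case: (leqP N s) => hNs.
  apply: leq_trans (card_prod _) _.
  apply: (@leq_trans (\prod_(i < d.+2) N.*2)).
    apply: leq_prod => i _; apply: card_spread1 => _ _ /imsetP [x xS ->] /imsetP [y yS ->].
    exact: hsp.
  rewrite prod_nat_const card_ord -muln2 expnMn mulnC expnS mulnA.
  apply: (@leq_trans (2 ^ d.+2 * s * N ^ d.+1)); first by rewrite leq_mul2r leq_mul2l hNs !orbT.
  by rewrite leq_mul2r leq_addl orbT.
set S' := (@phi s1 d.+2 M) @: S.
set N' := N %/ s + 2.
have hsp' : spread S' N' := contract_spread hsp.
have hnc' : ~ pcontains r S' by move=> h; apply: hnc; exact: contract_avoid h.
have hs6 : 6 <= s by rewrite /s /s1; lia.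
have hNN : N' < N.
  have : N %/ s <= N %/ 2 by apply: leq_div2l => //; lia.
  rewrite /N'; lia.
have hS' := IHN N' hNN S' hsp' hnc'.
have hN'3 : N' <= 3 * (N %/ s).
  have : 0 < N %/ s by rewrite divn_gt0 // ltnW.
  rewrite /N'; lia.
have hfib : #|S| <= #|S'| * (k.-1) ^ d.+2 +
    s ^ d.+2 * \sum_(j < d.+2) #|[set b in S' | #|T| <= #|vals j (fiber s1 S b)|]|.
  rewrite (card_fibers s1) -/S'.
  apply: (@leq_trans (\sum_(b in S') ((k.-1) ^ d.+2 + s ^ d.+2 *
          \sum_(j < d.+2) (#|T| <= #|vals j (fiber s1 S b)|)))).
    apply: leq_sum => b _.
    case: (boolP [exists j, #|T| <= #|vals j (fiber s1 S b)|]).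
      case/existsP => j hj; apply: leq_trans (@fiber_box s1 _ _ S b) _.
      apply: leq_trans (leq_addl _ _); apply: leq_pmulr.
      by rewrite (bigD1 j) //= hj.
    rewrite negb_exists => /forallP hn; apply: leq_trans (leq_addr _ _).
    apply: (@fiber_nonthick s1) => j; have := hn j; rewrite -hk; lia.
  rewrite big_split /= sum_nat_const mulnC leq_add2l -big_distrr /= leq_mul2l.
  rewrite exchange_big /=; apply/orP; right; apply: eq_leq; apply: eq_bigr => j _.
  exact: sum_bool.
have hthick : \sum_(j < d.+2) #|[set b in S' | #|T| <= #|vals j (fiber s1 S b)|]|
    <= d.+2 * (N'.*2 * 2 ^ s * (cd * N' ^ d)).
  have -> : d.+2 * (N'.*2 * 2 ^ s * (cd * N' ^ d)) =
     \sum_(j < d.+2) (N'.*2 * 2 ^ s * (cd * N' ^ d)) by rewrite sum_nat_const card_ord.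
  apply: leq_sum => j _.
  exact: (thick_card j IH hk ir hnc hsp').
apply: (@arith #|S| #|S'| c ((k.-1) ^ d.+2) Bt (N' ^ d.+1) ((N %/ s) ^ d.+1)
          (3 ^ d.+1) (s ^ d.+1) (N ^ d.+1)) => //.
- apply: leq_trans hfib _; rewrite leq_add2l.
  apply: leq_trans (leq_mul (leqnn _) hthick) _.
  rewrite /Bt -mul2n (expnS N'); lia.
- by rewrite -expnMn leq_exp2r // mulnC.
- have h1 : (k.-1) ^ d.+2 <= k ^ d.+2 by rewrite leq_exp2r //; lia.
  have h2 : 2 * k ^ d.+2 + 2 <= (2 * k ^ d.+2 + 2) ^ d.+1 by apply: leq_self_exp.
  have -> : s = 3 * (2 * k ^ d.+2 + 2) by rewrite /s /s1; lia.
  rewrite expnMn; nia.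
- rewrite -expnMn leq_exp2r // mulnC; exact: leq_divM.
- by rewrite leq_exp2r // leq_div.
- by rewrite /c leq_addr.
Qed.

Lemma KM_all d k : exists c, KMprop d k c.
Proof.
elim: d => [|d [cd IH]]; first by exists k; exact: KM_base.
exact: KM_step IH.
Qed.


Lemma sum_lt_r n r : \sum_(i < n) (i < r : nat) = minn r n.
Proof.
elim: n => [|n IH]; first by rewrite big_ord0 minn0.
rewrite big_ord_recr /= IH; case: (ltnP n r) => h; lia.
Qed.

Section LevelCard.
Variables (n' k' l q : nat).
Local Notation n := n'.+1.
Local Notation k := k'.+1.
Hypotheses (hq : 0 < q) (hq1 : q.-1 <= l %/ n) (hq2 : l %/ n + (0 < l %% n) + q <= k).

Definition zz (i : 'I_n) : nat := l %/ n + (i < l %% n).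
Definition YY (y : {ffun 'I_n' -> 'I_q}) (i : 'I_n) : nat :=
  if (insub (val i) : option 'I_n') is Some j then y j else 0.
Definition YP (y : {ffun 'I_n' -> 'I_q}) (i : 'I_n) : nat :=
  if (i : nat) == 0 then 0 else YY y (inord i.-1).

Lemma YY_le y i : YY y i <= q.-1.
Proof. rewrite /YY; case: insub => [j|] //; have := ltn_ord (y j); lia. Qed.
Lemma YP_le y i : YP y i <= q.-1.
Proof. rewrite /YP; case: eqP => // _; exact: YY_le. Qed.
Lemma zz_ge i : q.-1 <= zz i.
Proof. rewrite /zz; lia. Qed.
Lemma zz_le i : zz i <= k - q.
Proof. rewrite /zz; have : (i < l %% n) <= (0 < l %% n) by case: ltnP => //; lia. lia. Qed.

Definition FF (y : {ffun 'I_n' -> 'I_q}) : grid n k :=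
  [ffun i => inord (zz i + YY y i - YP y i)].

Lemma FF_val y i : (FF y i : nat) = zz i + YY y i - YP y i.
Proof.
rewrite ffunE inordK //; have := zz_le i; have := YY_le y i; lia.
Qed.

Lemma FF_inj : injective FF.
Proof.
move=> y y' e.
have hY : forall m (i : 'I_n), (i : nat) = m -> YY y i = YY y' i.
  elim=> [|m IH] i hi.
    have := FF_val y i; have := FF_val y' i; rewrite e => ->.
    rewrite /YP hi eqxx; have := zz_ge i; lia.
  have hP : YP y i = YP y' i.
    rewrite /YP hi /=; apply: IH; rewrite inordK //; have := ltn_ord i; lia.
  have := FF_val y i; have := FF_val y' i; rewrite e hP => ->.
  have := YP_le y' i; have := zz_ge i; lia.
apply/ffunP => j; apply: val_inj.
have := hY _ (lift ord_max j) erefl; rewrite /YY.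
have -> : (insub (val (lift ord_max j)) : option 'I_n') = Some j.
  by rewrite /= /bump leqNgt ltn_ord add0n valK.
done.
Qed.

Lemma sum_zz : \sum_(i < n) zz i = l.
Proof.
rewrite big_split /= sum_nat_const card_ord sum_lt_r.
rewrite (minn_idPl (ltnW (ltn_pmod l (ltn0Sn n')))).
by rewrite mulnC -divn_eq.
Qed.

Lemma sum_YY y : \sum_(i < n) YY y i = \sum_(j < n') (y j : nat).
Proof.
rewrite big_ord_recr /= {2}/YY insubF ?ltnn // addn0.
apply: eq_bigr => j _; rewrite /YY.
have -> : (insub (val (widen_ord (leqnSn n') j)) : option 'I_n') = Some j by rewrite /= valK.
done.
Qed.

Lemma sum_YP y : \sum_(i < n) YP y i = \sum_(j < n') (y j : nat).
Proof.
rewrite big_ord_recl /= {1}/YP /= add0n.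
apply: eq_bigr => j _; rewrite /YP /= /YY.
have -> : (insub (val (inord (bump 0 j).-1 : 'I_n)) : option 'I_n') = Some j.
  rewrite /= inordK /bump ?add1n /= ?valK //; have := ltn_ord j; lia.
done.
Qed.

Lemma FF_level y : level (FF y) = l.
Proof.
rewrite /level.
have e : \sum_(j < n) (FF y j : nat) + \sum_(i < n) YP y i =
         \sum_(i < n) zz i + \sum_(i < n) YY y i.
  rewrite -!big_split /=; apply: eq_bigr => i _; rewrite FF_val.
  have := YP_le y i; have := zz_ge i; lia.
move: e; rewrite sum_zz sum_YY sum_YP; lia.
Qed.

Lemma level_card : q ^ n' <= #|level_set n k l|.
Proof.
rewrite -[q]card_ord -[n' in _ ^ n']card_ord -card_ffun.
rewrite -(card_imset _ FF_inj); apply: subset_leq_card.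
apply/subsetP => _ /imsetP [y _ ->]; by rewrite inE FF_level.
Qed.

End LevelCard.


Definition gl n k l := minn (minn l.+1 (k * n - n - l).+1) k.

Lemma level_lb n' k' l : l <= k'.+1 * n'.+1 - n'.+1 ->
  (maxn 1 (gl n'.+1 k'.+1 l %/ n'.+1)) ^ n' <= #|level_set n'.+1 k'.+1 l|.
Proof.
move=> hl; set n := n'.+1; set k := k'.+1; set g := gl n k l.
have hdl := divn_eq l n; have hml := ltn_pmod l (ltn0Sn n').
set X := l %/ n in hdl *; set R := l %% n in hdl hml *.
have hg := leq_divM g n; set q := g %/ n in hg *.
have hg1 : g <= l.+1 by rewrite /g /gl; lia.
have hg2 : g <= (k * n - n - l).+1 by rewrite /g /gl; lia.
have hg3 : g <= k by rewrite /g /gl; lia.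
have hn : 0 < n by [].
have hkn : n <= k * n by rewrite leq_pmull.
move: hl; rewrite -/n -/k => hl.
apply: level_card; rewrite -/X -/R -/n -/k; clearbody X R q g.
- by rewrite leq_max.
- case: (leqP q 0) => hq; first by rewrite (maxn_idPl _) //; lia.
  rewrite (maxn_idPr _) //.
  have : q * n <= X.+1 * n by rewrite mulSn; lia.
  rewrite leq_pmul2r //; lia.
- case: (leqP q 0) => hq.
    rewrite (maxn_idPl _); last by lia.
    case: (posnP R) => hR.
      have : X.+1 * n <= k * n by rewrite mulSn; lia.
      rewrite leq_pmul2r //; lia.
    have : X.+1 * n < k * n by rewrite mulSn; lia.
    rewrite ltn_pmul2r //; lia.
  rewrite (maxn_idPr _) //.
  case: (posnP R) => hR.
    have : (X + q) * n <= k * n by rewrite mulnDl; lia.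
    rewrite leq_pmul2r //; lia.
  have : (X + q).+1 * n <= k * n by rewrite mulSn mulnDl; lia.
  rewrite leq_pmul2r //; lia.
Qed.


Lemma pattern_of_dim (T : finType) (le : rel T) dP n' :
  is_dim le dP -> (dP <= n'.+1)%N ->
  exists r : 'I_n'.+1 -> T -> nat, (forall i, injective (r i)) /\
    forall k (S : {set grid n'.+1 k}), pcontains r S -> contains_copy le S.
Proof.
case=> hd [[L [Lb Lr]] _] hdn.
case: dP hd L Lb Lr hdn => // d' _ L Lb Lr hdn.
pose r (i : 'I_n'.+1) p := (L (inord (minn i d')) p : nat).
have ir : forall i, injective (r i).
  move=> i p q h; apply: (bij_inj (Lb (inord (minn i d')))); exact: val_inj h.
have rE : forall i p, r i p = L (inord (minn i d')) p by [].
clearbody r.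
exists r; split => // k S [f [fS fo]].
exists f; split; last split.
- move=> p q e; have h0 : r ord0 p = r ord0 q.
    have h1 := fo ord0 p q; have h2 := fo ord0 q p.
    rewrite e ltnn in h1 h2.
    case: (ltngtP (r ord0 p) (r ord0 q)) => //; by rewrite ?h1 ?h2.
  exact: (ir ord0 p q h0).
- exact: fS.
move=> p q; apply/idP/idP.
  move/Lr => h; apply/forallP => j; rewrite leqNgt -fo -leqNgt !rE; exact: h.
move/forallP => h; apply/Lr => i.
have hi : (i < n'.+1)%N by have := ltn_ord i; lia.
have := h (Ordinal hi); rewrite leqNgt -fo -leqNgt !rE /=.
have -> : inord (minn i d') = i.
  apply: val_inj; rewrite /= inordK; have := ltn_ord i; lia.
done.
Qed.

Lemma leq_exp_base a b e : (a <= b)%N -> (a ^ e <= b ^ e)%N.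
Proof. move=> h; elim: e => // e IH; rewrite !expnS; exact: leq_mul. Qed.

Lemma coord_le_level n k (x : grid n k) i : (x i <= level x)%N.
Proof. by rewrite /level (bigD1 i) //= leq_addr. Qed.

Lemma level_le n k (x : grid n k) : (level x <= k * n - n)%N.
Proof.
rewrite /level; have -> : (k * n - n = \sum_(j < n) k.-1)%N.
  rewrite sum_nat_const card_ord; case: k x => [|k] x /=; lia.
apply: leq_sum => j _; have := ltn_ord (x j); lia.
Qed.

Lemma co_coord_le n k (x : grid n k) i : (k.-1 - x i <= k * n - n - level x)%N.
Proof.
have e : (\sum_(j < n) (k.-1 - x j) + level x = k * n - n)%N.
  rewrite /level -big_split /=.
  have -> : (k * n - n = \sum_(j < n) k.-1)%N.
    rewrite sum_nat_const card_ord; case: k x => [|k] x /=; lia.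
  apply: eq_bigr => j _; have := ltn_ord (x j); lia.
have : (k.-1 - x i <= \sum_(j < n) (k.-1 - x j))%N by rewrite (bigD1 i) //= leq_addr.
lia.
Qed.

Section Count.
Variables (n' k : nat) (c0 : nat) (S : {set grid n'.+1 k}).
Local Notation n := n'.+1.
Hypothesis hKM : forall (S' : {set grid n k}) N, S' \subset S -> spread S' N ->
  (#|S'| <= c0 * N ^ n')%N.

Lemma count_g G : (#|[set x in S | gl n k (level x) < G]| <= 2 * c0 * G ^ n')%N.
Proof.
case: (leqP G k) => hGk; last first.
  apply: (@leq_trans #|S|).
    by apply: subset_leq_card; apply/subsetP => x; rewrite inE => /andP [].
  apply: leq_trans (@hKM S k (subxx S) _) _.
    by move=> x y _ _ i; have := ltn_ord (x i); lia.
  have : (k ^ n' <= G ^ n')%N by apply: leq_exp_base; lia.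
  rewrite -mulnA; move=> h; apply: leq_trans (leq_pmull _ _) => //.
  by rewrite leq_mul2l h orbT.
set X1 := [set x in S | level x < G].
set X2 := [set x in S | k * n - n - level x < G].
have h1 : (#|X1| <= c0 * G ^ n')%N.
  apply: hKM; first by apply/subsetP => x; rewrite inE => /andP [].
  move=> x y; rewrite !inE => /andP [_ hx] _ i.
  apply: (leq_ltn_trans (coord_le_level x i)); apply: (leq_trans hx); exact: leq_addl.
have h2 : (#|X2| <= c0 * G ^ n')%N.
  apply: hKM; first by apply/subsetP => x; rewrite inE => /andP [].
  move=> x y; rewrite !inE => _ /andP [_ hy] i.
  have A : (k.-1 - y i <= k * n - n - level y)%N := co_coord_le y i.
  have B := ltn_ord (x i); lia.
apply: leq_trans (_ : #|X1 :|: X2| <= _)%N.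
  apply: subset_leq_card; apply/subsetP => x; rewrite !inE => /andP [xS hg].
  rewrite xS /=; move: hg; rewrite /gl; lia.
apply: leq_trans (leq_card_setU _ _) _; lia.
Qed.

Definition tl l := trunc_log 2 (gl n k l).

Lemma shell_count t :
  (#|[set x in S | tl (level x) == t]| <= 2 * c0 * (2 ^ t.+1) ^ n')%N.
Proof.
apply: leq_trans (count_g _); apply: subset_leq_card; apply/subsetP => x.
rewrite !inE => /andP [-> /eqP <-] /=; exact: trunc_log_ltn.
Qed.

End Count.

Definition beta n' t := (maxn 1 (2 ^ t %/ n'.+1)) ^ n'.

Lemma beta_le n' k' l : (l <= k'.+1 * n'.+1 - n'.+1)%N ->
  (beta n' (tl n' k'.+1 l) <= #|level_set n'.+1 k'.+1 l|)%N.
Proof.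
move=> hl; apply: leq_trans (level_lb hl); apply: leq_exp_base.
rewrite geq_max leq_maxl /=; apply: leq_trans (leq_maxr 1 _); apply: leq_div2r.
apply: trunc_logP => //; rewrite /gl; lia.
Qed.

Lemma beta_gt0 n' t : (0 < beta n' t)%N.
Proof. by rewrite /beta expn_gt0 leq_max. Qed.

Lemma shell_K n' c0 t :
  (2 * c0 * (2 ^ t.+1) ^ n' <= (2 * c0 * (4 * n'.+1) ^ n') * beta n' t)%N.
Proof.
rewrite /beta -[X in (_ <= X)%N]mulnA -expnMn leq_mul2l; apply/orP; right; apply: leq_exp_base.
have h := ltn_ceil (2 ^ t) (ltn0Sn n').
set q := 2 ^ t %/ n'.+1 in h *; clearbody q.
have h2 : (q.+1 <= 2 * maxn 1 q)%N by rewrite /maxn; case: (ltnP 1 q) => hq; lia.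
have h3 : (q.+1 * n'.+1 * 2 <= 2 * maxn 1 q * n'.+1 * 2)%N by rewrite !leq_mul2r h2 !orbT.
rewrite expnS; lia.
Qed.

Module RealPart.
From mathcomp Require Import order ssralg ssrnum Rstruct.
Import Order.TTheory GRing.Theory Num.Theory.

Local Open Scope ring_scope.

Lemma lubell_bound n' k' c0 (S : {set grid n'.+1 k'.+1}) :
  (forall (S' : {set grid n'.+1 k'.+1}) N, S' \subset S -> spread S' N ->
     (#|S'| <= c0 * N ^ n')%N) ->
  Rle (lubell S) (INR ((trunc_log 2 k'.+1).+1 * (2 * c0 * (4 * n'.+1) ^ n'))).
Proof.
move=> hKM.
set n := n'.+1; set k := k'.+1; set N := (k * n - n)%N.
set Tm := trunc_log 2 k; set K := (2 * c0 * (4 * n) ^ n')%N.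
rewrite /lubell sum_f_R0E INRE; apply/RleP.
under eq_bigr => i _ do rewrite RdivE !INRE.
rewrite big_mkord.
have stepA : (\sum_(i < N.+1) (#|S :&: level_set n k i|%:R / #|level_set n k i|%:R)
   = \sum_(x in S) (#|level_set n k (level x)|%:R)^-1 :> R).
  rewrite (partition_big (fun x : grid n k => (inord (level x) : 'I_N.+1)) xpredT) //=.
  apply: eq_bigr => i _.
  rewrite (eq_bigr (fun _ => (#|level_set n k i|%:R)^-1)); last first.
    move=> x /andP [_ /eqP <-]; rewrite inordK //; rewrite ltnS; exact: level_le.
  rewrite (eq_bigl (fun x => x \in S :&: level_set n k i)).
    by rewrite sumr_const mulr_natl.
  move=> x; rewrite !inE; congr (_ && _).
  rewrite -(inj_eq val_inj) /= inordK // ltnS; exact: level_le.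
rewrite stepA; clear stepA.
have hb : forall t, (0 < (beta n' t)%:R :> R) by move=> t; rewrite ltr0n beta_gt0.
apply: (@le_trans _ _ (\sum_(x in S) ((beta n' (tl n' k (level x)))%:R)^-1)).
  apply: ler_sum => x _; rewrite lef_pV2 ?posrE ?hb //; last first.
    by rewrite ltr0n; apply: leq_trans (beta_gt0 n' (tl n' k (level x))) (beta_le (level_le x)).
  by rewrite ler_nat; exact: beta_le (level_le x).
rewrite (partition_big (fun x : grid n k => (inord (tl n' k (level x)) : 'I_Tm.+1)) xpredT) //=.
apply: (@le_trans _ _ (\sum_(t < Tm.+1) K%:R)); last first.
  by rewrite sumr_const card_ord natrM mulr_natl.
apply: ler_sum => t _.
have htl : forall x : grid n k, (tl n' k (level x) < Tm.+1)%N.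
  move=> x; rewrite ltnS; apply: leq_trunc_log; rewrite /gl; lia.
rewrite (eq_bigr (fun _ => ((beta n' t)%:R)^-1)); last first.
  move=> x /andP [_ /eqP <-]; rewrite inordK //.
rewrite (eq_bigl (fun x => x \in [set x in S | tl n' k (level x) == t])); last first.
  move=> x; rewrite !inE; congr (_ && _).
  by rewrite -(inj_eq val_inj) /= inordK.
rewrite sumr_const -[X in X <= _]mulr_natl.
rewrite ler_pdivrMr // -natrM ler_nat.
apply: leq_trans (shell_count hKM t) _; exact: shell_K.
Qed.

End RealPart.

From Stdlib Require Import ClassicalEpsilon Lra Psatz.

Definition cKM d k : nat := proj1_sig (constructive_indefinite_description _ (KM_all d k)).
Lemma cKM_spec d k : KMprop d k (cKM d k).
Proof. exact: proj2_sig (constructive_indefinite_description _ (KM_all d k)). Qed.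

Definition Bnd m n : nat := (8 * cKM n.-1 m * (4 * n) ^ n.-1)%N.

Lemma le_sum_ord (F : nat -> nat) j N : (j <= N)%N -> (F j <= \sum_(i < N.+1) F i)%N.
Proof.
move=> h; have hj : (j < N.+1)%N by [].
by rewrite (bigD1 (Ordinal hj)) //= leq_addr.
Qed.

Lemma ln_pow2 t : (INR t * ln 2 = ln (INR (2 ^ t)))%R.
Proof.
have h2 : INR 2 = 2%R by simpl; lra.
elim: t => [|t IH]; first by rewrite expn0 /= ln_1; lra.
rewrite expnS mult_INR h2 ln_mult; [| lra | apply: lt_0_INR; apply/ltP; exact: expn_gt0].
rewrite -IH (S_INR t); lra.
Qed.

Lemma ln_le x y : (0 < x)%R -> (x <= y)%R -> (ln x <= ln y)%R.
Proof.
move=> hx hxy; case: (Rle_lt_or_eq_dec _ _ hxy) => h.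
  by apply: Rlt_le; apply: ln_increasing.
by rewrite h; apply: Rle_refl.
Qed.

Lemma Tm_bound k : (2 <= k)%N -> (INR (trunc_log 2 k).+1 <= 4 * ln (INR k))%R.
Proof.
move=> hk.
have h2k : (2 ^ trunc_log 2 k <= k)%N by apply: trunc_logP => //; lia.
have hk2 : (2 <= INR k)%R by change 2%R with (INR 2); apply: le_INR; apply/leP.
have e1 : (INR (trunc_log 2 k) * ln 2 <= ln (INR k))%R.
  rewrite ln_pow2; apply: ln_le.
    apply: lt_0_INR; apply/ltP; exact: expn_gt0.
  by apply: le_INR; apply/leP.
have e2 : (ln 2 <= ln (INR k))%R by apply: ln_le; lra.
have e3 := ln_lt_2.
have e4 : (0 <= INR (trunc_log 2 k))%R by apply: pos_INR.
rewrite S_INR; nra.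
Qed.

Theorem mainTheorem6 :
  exists alpha : nat -> R,
  forall (T : finType) (le : rel T), is_partial_order le ->
  exists C : R,
  forall (dP n k : nat), is_dim le dP -> (dP <= n)%N -> (2 <= k)%N ->
  forall S : {set grid n k}, ~ contains_copy le S ->
  (lubell S <= C * alpha n * ln (INR k))%R.
Proof.
exists (fun n => INR (\sum_(m < n.+1) Bnd m n).+1) => T le _.
exists (INR (\sum_(n0 < #|T|.+1) Bnd #|T| n0).+1) => dP n k hdim hdn hk S hnc.
have hd0 : (0 < dP)%N by case: hdim.
case: n hdn S hnc => [|n'] hdn S hnc; first by lia.
case: k hk S hnc => [|k'] hk S hnc; first by lia.
case: (pattern_of_dim hdim hdn) => r [ir hcopy].
set c0 := cKM n' #|T|.
have hKM : forall (S' : {set grid n'.+1 k'.+1}) N, S' \subset S -> spread S' N ->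
    (#|S'| <= c0 * N ^ n')%N.
  move=> S' N hsub hsp; apply: (cKM_spec (M := k'.+1) (r := r)) => // hc.
  apply: hnc; apply: hcopy; case: hc => f [fS fo]; exists f; split => // p.
  exact: (subsetP hsub).
have hL := RealPart.lubell_bound hKM.
apply: (Rle_trans _ _ _ hL).
set Tm := trunc_log 2 k'.+1.
set K := (2 * c0 * (4 * n'.+1) ^ n')%N.
have hT := Tm_bound hk.
have hK0 : (0 <= INR K)%R by apply: pos_INR.
have hBK : INR (Bnd #|T| n'.+1) = (4 * INR K)%R.
  have -> : Bnd #|T| n'.+1 = (4 * K)%N by rewrite /Bnd /K /c0 /= mulnA; lia.
  rewrite mult_INR; simpl; lra.
have hB : (INR (Bnd #|T| n'.+1) <=
     INR (\sum_(n0 < #|T|.+1) Bnd #|T| n0).+1 * INR (\sum_(m < n'.+2) Bnd m n'.+1).+1)%R.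
  rewrite -mult_INR; apply: le_INR; apply/leP.
  case: (leqP #|T| n'.+1) => h.
    apply: leq_trans (le_sum_ord (fun m => Bnd m n'.+1) h) _.
    apply: leq_trans (leqnSn _) _; exact: (leq_pmull _ (ltn0Sn _)).
  apply: leq_trans (le_sum_ord (fun n0 => Bnd #|T| n0) (ltnW h)) _.
  apply: leq_trans (leqnSn _) _; exact: (leq_pmulr _ (ltn0Sn _)).
have hln : (0 <= ln (INR k'.+1))%R.
  rewrite -ln_1; apply: ln_le; first lra.
  change 1%R with (INR 1); apply: le_INR; apply/leP; lia.
rewrite mult_INR.
apply: (Rle_trans _ (4 * ln (INR k'.+1) * INR K)%R).
  by apply: Rmult_le_compat_r.
have -> : (4 * ln (INR k'.+1) * INR K = INR (Bnd #|T| n'.+1) * ln (INR k'.+1))%R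
  by rewrite hBK; ring.
by apply: Rmult_le_compat_r.
Qed.
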